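(* Let $S$ be an additive numerical semigroup with multiplicity $e$ and blowup $B$. Then ${\rm d}_{\max}(S)=\max\{d(f;B^{\mathcal D}): f\in\operatorname{maxAp}(B;e)\}$.
   Context: $S$ is a numerical semigroup (a submonoid of $\mathbb N$ with finite complement) with minimal generators $e<a_1<\dots<a_t$. An $S$-factorization of $n$ is $(c_0,\dots,c_t)\in\mathbb N^{t+1}$ with $c_0e+\sum c_ia_i=n$, of length $\sum c_i$. ${\rm ord}(n;S)$ is the maximal such length, ${\rm d}_{\max}(n;S)$ is the number of factorizations of maximal length, and ${\rm d}_{\max}(S)=\max_{n\in S}{\rm d}_{\max}(n;S)$. $S$ is additive if ${\rm ord}(u+e;S)={\rm ord}(u;S)+1$ for all $u\in S$. The blowup is $B=\langle e,d_1,\dots,d_t\rangle$ with $d_i=a_i-e$, and $\mathcal D=(e,d_1,\dots,d_t)$. $d(b;B^{\mathcal D})$ is the number of tuples $(x_0,\dots,x_t)\in\mathbb N^{t+1}$ with $x_0e+\sum x_id_i=b$. For a numerical semigroup $T$ and $u\in T$, $\operatorname{Ap}(T;u)=\{w\in T:w-u\notin T\}$, and $\operatorname{maxAp}(T;u)$ is the set of elements of $\operatorname{Ap}(T;u)\setminus\{0\}$ that are maximal with respect to the partial order $w\preceq w'$ iff $w'-w\in T$. *)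

(* Defs.v *)
From mathcomp Require Import all_boot.
Set Implicit Arguments. Unset Strict Implicit. Unset Printing Implicit Defensive.

Definition inS (g : seq nat) (n : nat) : Prop :=
  exists c : 'I_(size g) -> nat, \sum_(i < size g) c i * nth 0 g i = n.

(* When all weights are positive
   (always the case below), every coefficient is <= n, so the bounded type
   'I_n.+1 captures all such tuples. *)
Definition fact_set (g : seq nat) (n : nat) : {set {ffun 'I_(size g) -> 'I_n.+1}} :=
  [set c : {ffun 'I_(size g) -> 'I_n.+1} | \sum_(i < size g) (c i : nat) * nth 0 g i == n].

Definition flen (k n : nat) (c : {ffun 'I_k -> 'I_n.+1}) : nat :=
  \sum_(i < k) (c i : nat).

Definition ordS (g : seq nat) (n : nat) : nat :=
  \max_(c in fact_set g n) flen c.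

Definition dmax_n (g : seq nat) (n : nat) : nat :=
  #|[set c in fact_set g n | flen c == ordS g n]|.

Definition dcount (D : seq nat) (b : nat) : nat := #|fact_set D b|.

Definition min_gens_numsg (g : seq nat) : Prop :=
  [/\ sorted ltn g,
      (forall a, a \in g -> ~ inS (rem a g) a) &
      exists N, forall n, N <= n -> inS g n].

Definition additive (e : nat) (g : seq nat) : Prop :=
  forall u, inS g u -> ordS g (u + e) = (ordS g u).+1.

(* Apery set Ap(T;u) = {w in T : w - u notin T} (integer subtraction) *)
Definition inAp (T : seq nat) (u w : nat) : Prop :=
  inS T w /\ (w < u \/ ~ inS T (w - u)).

Definition precT (T : seq nat) (w w' : nat) : Prop := w <= w' /\ inS T (w' - w).

Definition inmaxAp (T : seq nat) (u w : nat) : Prop :=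
  [/\ inAp T u w, w <> 0 &
      forall w', inAp T u w' -> w' <> 0 -> precT T w w' -> w' = w].

Definition is_max_of (P : nat -> Prop) (F : nat -> nat) (M : nat) : Prop :=
  (exists x, P x /\ F x = M) /\ (forall x, P x -> F x <= M).

Definition blowupD (e : nat) (as_ : seq nat) : seq nat :=
  e :: [seq a - e | a <- as_].

(* Main.v *)
Require Import Defs.
From mathcomp Require Import all_boot.
From mathcomp Require Import zify.
From Stdlib Require Import Classical.
Set Implicit Arguments. Unset Strict Implicit. Unset Printing Implicit Defensive.

Definition Sw (w : seq nat) (h : nat -> nat) := \sum_(0 <= i < size w) h i * nth 0 w i.
Definition cn k m (c : {ffun 'I_k -> 'I_m.+1}) (i : nat) : nat :=
  if (insub i : option 'I_k) is Some j then (c j : nat) else 0.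
Definition mk k m (h : nat -> nat) : {ffun 'I_k -> 'I_m.+1} :=
  [ffun j : 'I_k => inord (h j)].

Lemma cnE k m (c : {ffun 'I_k -> 'I_m.+1}) (j : 'I_k) : cn c j = c j.
Proof. by rewrite /cn valK. Qed.

Lemma mkE k m (h : nat -> nat) i : i < k -> h i <= m -> cn (mk k m h) i = h i.
Proof. move=> ik hm; by rewrite /cn (insubT (fun i => i < k) ik) /= ffunE inordK. Qed.

Lemma fact_setE w n (c : {ffun 'I_(size w) -> 'I_n.+1}) :
  (c \in fact_set w n) = (Sw w (cn c) == n).
Proof.
rewrite inE /Sw big_mkord; congr (_ == _); apply eq_bigr => j _; by rewrite cnE.
Qed.

Lemma flenE k n (c : {ffun 'I_k -> 'I_n.+1}) : flen c = \sum_(0 <= i < k) cn c i.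
Proof. rewrite /flen big_mkord; apply eq_bigr => j _; by rewrite cnE. Qed.

Lemma cn_inj k m (c c' : {ffun 'I_k -> 'I_m.+1}) :
  (forall i, i < k -> cn c i = cn c' i) -> c = c'.
Proof.
move=> H; apply/ffunP => j; apply/val_inj; rewrite /= -!cnE; apply H; exact: ltn_ord.
Qed.

Lemma inS_E w n : inS w n <-> exists h, Sw w h = n.
Proof.
split.
- case=> c <-; exists (fun i => if (insub i : option 'I_(size w)) is Some j then c j else 0).
  rewrite /Sw big_mkord; apply eq_bigr => j _; by rewrite valK.
- case=> h <-; exists (fun j => h j); by rewrite /Sw big_mkord.
Qed.

Lemma term_le k (F : nat -> nat) i : i < k -> F i <= \sum_(0 <= j < k) F j.
Proof.
move=> ik; rewrite big_mkord (bigD1 (Ordinal ik)) //=; exact: leq_addr.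
Qed.

Definition poswt (w : seq nat) := forall i, i < size w -> 0 < nth 0 w i.

Lemma Sw_bound w h n : poswt w -> Sw w h = n -> forall i, i < size w -> h i <= n.
Proof.
move=> pw <- i iw; apply: leq_trans (term_le (fun i => h i * nth 0 w i) iw).
by rewrite leq_pmulr // pw.
Qed.

Lemma mk_in w n h : poswt w -> Sw w h = n ->
  mk (size w) n h \in fact_set w n /\ forall i, i < size w -> cn (mk (size w) n h) i = h i.
Proof.
move=> pw hs.
have E : forall i, i < size w -> cn (mk (size w) n h) i = h i.
  by move=> i iw; rewrite mkE // (Sw_bound pw hs).
split=> //; rewrite fact_setE; apply/eqP; rewrite -[RHS]hs /Sw; apply: eq_big_nat => i /andP[_ iw].
by rewrite E.
Qed.

Lemma O1 w n h : poswt w -> Sw w h = n -> (\sum_(0 <= i < size w) h i) <= Defs.ordS w n.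
Proof.
move=> pw hs; have [Hin E] := mk_in pw hs.
have -> : \sum_(0 <= i < size w) h i = flen (mk (size w) n h).
  rewrite flenE; apply: eq_big_nat => i /andP[_ iw]; by rewrite E.
exact: (leq_bigmax_cond (P := mem (fact_set w n))).
Qed.

Lemma O2 w n : poswt w -> inS w n ->
  exists h, Sw w h = n /\ \sum_(0 <= i < size w) h i = Defs.ordS w n.
Proof.
move=> pw /inS_E [h hs]; have [Hin _] := mk_in pw hs.
have : 0 < #|mem (fact_set w n)| by apply/card_gt0P; exists (mk (size w) n h).
move/(eq_bigmax_cond (flen (n:=n)(k:=size w))) => [c0 Hc0 Hmax].
exists (cn c0); split; first by apply/eqP; rewrite -fact_setE.
by rewrite /Defs.ordS Hmax flenE.
Qed.

Lemma inj_le (T U : finType) (A : {set T}) (B : {set U}) (f : T -> U) :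
  {in A &, injective f} -> (forall x, x \in A -> f x \in B) -> #|A| <= #|B|.
Proof.
move=> inj sub; rewrite -(card_in_imset inj); apply: subset_leq_card.
apply/subsetP => y /imsetP [x xA ->]; exact: sub.
Qed.

Definition Rs (as_ : seq nat) (h : nat -> nat) := \sum_(0 <= i < size as_) h i.+1.
Definition Ts (e : nat) (as_ : seq nat) (h : nat -> nat) :=
  \sum_(0 <= i < size as_) h i.+1 * (nth 0 as_ i - e).

Lemma Sg_E e as_ h : all (fun a => e < a) as_ ->
  Sw (e :: as_) h = (h 0 + Rs as_ h) * e + Ts e as_ h.
Proof.
move=> /(all_nthP 0) Hall.
rewrite /Sw /= big_nat_recl //= mulnDl -addnA; congr (_ + _).
rewrite /Rs /Ts big_distrl /= -big_split /=; apply: eq_big_nat => i /andP[_ it].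
have := Hall i it => /= lt; rewrite -mulnDr addnC subnK //; exact: ltnW.
Qed.

Lemma nth_bl e as_ i : nth 0 (blowupD e as_) i.+1 = nth 0 as_ i - e.
Proof.
rewrite /blowupD /=; case: (ltnP i (size as_)) => H; first by rewrite (nth_map 0).
by rewrite !nth_default ?size_map.
Qed.

Lemma size_bl e as_ : size (blowupD e as_) = (size as_).+1.
Proof. by rewrite /= size_map. Qed.

Lemma SD_E e as_ h : Sw (blowupD e as_) h = h 0 * e + Ts e as_ h.
Proof.
rewrite /Sw size_bl big_nat_recl //=; congr (_ + _).
apply: eq_big_nat => i _; by rewrite -nth_bl.
Qed.

Lemma len_E as_ n h : n = (size as_).+1 ->
  \sum_(0 <= i < n) h i = h 0 + Rs as_ h.
Proof. move=> ->; by rewrite big_nat_recl. Qed.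

Lemma Rs_ext as_ h h' : (forall i, h i.+1 = h' i.+1) -> Rs as_ h = Rs as_ h'.
Proof. move=> H; apply: eq_big_nat => i _; by rewrite H. Qed.
Lemma Ts_ext e as_ h h' : (forall i, h i.+1 = h' i.+1) -> Ts e as_ h = Ts e as_ h'.
Proof. move=> H; apply: eq_big_nat => i _; by rewrite H. Qed.

Lemma pos_g e as_ : 0 < e -> all (fun a => e < a) as_ -> poswt (e :: as_).
Proof.
move=> e0 /(all_nthP 0) Hall [|i] //= ilt.
have := Hall i ilt => /= lt; exact: leq_trans e0 (ltnW lt).
Qed.

Lemma pos_D e as_ : 0 < e -> all (fun a => e < a) as_ -> poswt (blowupD e as_).
Proof.
move=> e0 /(all_nthP 0) Hall [|i] //; rewrite size_bl ltnS nth_bl => ilt.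
have := Hall i ilt => /= lt; by rewrite subn_gt0.
Qed.

Lemma RleT e as_ h : all (fun a => e < a) as_ -> Rs as_ h <= Ts e as_ h.
Proof.
move=> /(all_nthP 0) Hall; rewrite /Rs /Ts !big_mkord; apply: leq_sum => i _.
have := Hall i (ltn_ord i) => /= lt; by rewrite leq_pmulr // subn_gt0.
Qed.

Lemma Sw_add w h h' : Sw w (fun i => h i + h' i) = Sw w h + Sw w h'.
Proof. rewrite /Sw -big_split /=; apply: eq_big_nat => i _; by rewrite mulnDl. Qed.

Lemma inD_T e as_ h : inS (blowupD e as_) (Ts e as_ h).
Proof.
apply/inS_E; exists (fun i => if i is 0 then 0 else h i).
rewrite SD_E mul0n add0n; exact: Ts_ext.
Qed.

Lemma inD_kT e as_ k h : inS (blowupD e as_) (k * e + Ts e as_ h).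
Proof.
apply/inS_E; exists (fun i => if i is 0 then k else h i).
rewrite SD_E; congr (_ + _); exact: Ts_ext.
Qed.

Lemma inD_add e as_ x y : inS (blowupD e as_) x -> inS (blowupD e as_) y ->
  inS (blowupD e as_) (x + y).
Proof.
move=> /inS_E [h <-] /inS_E [h' <-]; apply/inS_E; exists (fun i => h i + h' i).
exact: Sw_add.
Qed.

Lemma inD_0 e as_ : inS (blowupD e as_) 0.
Proof. have := inD_kT e as_ 0 (fun _ => 0); rewrite /Ts big1 //. Qed.

Lemma F1 e as_ n : all (fun a => e < a) as_ -> inS (e :: as_) n -> inS (blowupD e as_) n.
Proof.
move=> Hall /inS_E [h <-]; rewrite Sg_E //; exact: inD_kT.
Qed.

Lemma inS_g_add e as_ n k : all (fun a => e < a) as_ -> inS (e :: as_) n -> inS (e :: as_) (n + k * e).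
Proof.
move=> Hall /inS_E [h <-]; apply/inS_E; exists (fun i => if i is 0 then h 0 + k else h i).
rewrite !Sg_E // (@Rs_ext as_ _ h) // (@Ts_ext e as_ _ h) //. nia.
Qed.

Lemma ord_iter e as_ n k : all (fun a => e < a) as_ -> additive e (e :: as_) ->
  inS (e :: as_) n -> Defs.ordS (e :: as_) (n + k * e) = Defs.ordS (e :: as_) n + k.
Proof.
move=> Hall Hadd Hn; elim: k => [|k IH]; first by rewrite mul0n !addn0.
rewrite mulSn addnCA addnC Hadd ?IH ?addnS //.
by apply: inS_g_add.
Qed.

Lemma Rs_extb as_ h h' : (forall i, i < size as_ -> h i.+1 = h' i.+1) -> Rs as_ h = Rs as_ h'.
Proof. move=> H; apply: eq_big_nat => i /andP[_ ?]; by rewrite H. Qed.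

Lemma ApLemma e as_ n : 0 < e -> all (fun a => e < a) as_ -> additive e (e :: as_) ->
  inS (e :: as_) n ->
  inS (blowupD e as_) (n - Defs.ordS (e :: as_) n * e) /\
  (n - Defs.ordS (e :: as_) n * e < e \/
   ~ inS (blowupD e as_) (n - Defs.ordS (e :: as_) n * e - e)).
Proof.
move=> e0 Hall Hadd Hn.
have [h [hs hl]] := O2 (pos_g e0 Hall) Hn.
rewrite (@len_E as_) // in hl; rewrite Sg_E // in hs.
set L := Defs.ordS (e :: as_) n in hl *.
have Eb : n - L * e = Ts e as_ h by rewrite -hs -hl addKn.
rewrite Eb; split; first exact: inD_T.
case: (ltnP (Ts e as_ h) e) => [lt|ge]; [by left|right].
move=> /inS_E [x hx]; rewrite SD_E in hx.
set k := Rs as_ x.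
have Hord := ord_iter k Hall Hadd Hn.
pose c := fun i => if i is 0 then L + 1 + x 0 else x i.
have Hc : Sw (e :: as_) c = n + k * e.
  rewrite Sg_E // (@Rs_ext as_ c x) // (@Ts_ext e as_ c x) //.
  rewrite /= -/k. rewrite hl in hs. lia.
have := O1 (pos_g e0 Hall) Hc.
rewrite (@len_E as_) // Hord -/L (@Rs_ext as_ c x) //= -/k. lia.
Qed.

Lemma ZeroX e as_ f x : (f < e \/ ~ inS (blowupD e as_) (f - e)) ->
  Sw (blowupD e as_) x = f -> x 0 = 0.
Proof.
rewrite SD_E => Hap hx; case E: (x 0) => [//|m]; exfalso.
rewrite E in hx; case: Hap => [|H]; first lia.
apply: H; have -> : f - e = m * e + Ts e as_ x by rewrite -hx mulSn -addnA addKn.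
exact: inD_kT.
Qed.

Definition cmap as_ f (x : nat -> nat) := fun i => if i is 0 then f - Rs as_ x else x i.

Lemma cmapP e as_ f x : all (fun a => e < a) as_ ->
  (f < e \/ ~ inS (blowupD e as_) (f - e)) -> Sw (blowupD e as_) x = f ->
  Sw (e :: as_) (cmap as_ f x) = f + f * e /\
  \sum_(0 <= i < size (e :: as_)) cmap as_ f x i = f.
Proof.
move=> Hall Hap hx.
have x0 := ZeroX Hap hx.
have Tf : Ts e as_ x = f by move: hx; rewrite SD_E x0.
have RT := RleT x Hall.
rewrite Sg_E // (@len_E as_) // (@Rs_ext as_ _ x) // (@Ts_ext e as_ _ x) //=.
rewrite subnK; last lia.
split; lia.
Qed.

Lemma Low e as_ f : 0 < e -> all (fun a => e < a) as_ ->
  inS (blowupD e as_) f -> (f < e \/ ~ inS (blowupD e as_) (f - e)) ->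
  [/\ inS (e :: as_) (f + f * e), Defs.ordS (e :: as_) (f + f * e) = f &
      dcount (blowupD e as_) f <= dmax_n (e :: as_) (f + f * e)].
Proof.
move=> e0 Hall Hf Hap.
have Hin : inS (e :: as_) (f + f * e).
  case/inS_E: Hf => x hx; have [C1 _] := cmapP Hall Hap hx.
  apply/inS_E; by exists (cmap as_ f x).
have Hord : Defs.ordS (e :: as_) (f + f * e) = f.
  apply/eqP; rewrite eqn_leq; apply/andP; split; last first.
    case/inS_E: Hf => x hx; have [C1 C2] := cmapP Hall Hap hx.
    by rewrite -{1}C2; apply: O1 (pos_g e0 Hall) C1.
  have [h [hs hl]] := O2 (pos_g e0 Hall) Hin.
  rewrite (@len_E as_) // in hl; rewrite Sg_E // in hs.
  rewrite leqNgt; apply/negP => lt; rewrite hl in hs.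
  set L := Defs.ordS (e :: as_) (f + f * e) in lt hs.
  have [m Lm] : exists m, L = f + 1 + m by exists (L - f - 1); lia.
  rewrite Lm in hs.
  case: Hap => [|H]; first nia.
  apply: H; have -> : f - e = m * e + Ts e as_ h by nia.
  exact: inD_kT.
split=> //.
rewrite /dcount /dmax_n.
apply: (@inj_le _ _ _ _ (fun x => mk (size (e :: as_)) (f + f * e) (cmap as_ f (cn x)))).
- move=> x1 x2; rewrite !fact_setE => /eqP h1 /eqP h2 Heq.
  have [C1 _] := cmapP Hall Hap h1; have [D1 _] := cmapP Hall Hap h2.
  have [_ E1] := mk_in (pos_g e0 Hall) C1; have [_ E2] := mk_in (pos_g e0 Hall) D1.
  apply: cn_inj => i; case: i => [|j] ij.
    by rewrite (ZeroX Hap h1) (ZeroX Hap h2).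
  have ij' : j.+1 < size (e :: as_) by rewrite size_bl in ij.
  by have := E1 _ ij'; rewrite Heq E2 //= => ->.
- move=> x; rewrite fact_setE => /eqP h1.
  have [C1 C2] := cmapP Hall Hap h1.
  have [M E] := mk_in (pos_g e0 Hall) C1.
  rewrite inE M /= flenE Hord -[X in _ == X]C2; apply/eqP.
  apply: eq_big_nat => i /andP[_ ?]; exact: E.
Qed.

Lemma I1 e as_ n : 0 < e -> all (fun a => e < a) as_ ->
  dmax_n (e :: as_) n <= dcount (blowupD e as_) (n - Defs.ordS (e :: as_) n * e).
Proof.
move=> e0 Hall.
set L := Defs.ordS (e :: as_) n.
pose xm (h : nat -> nat) := fun i => if i is 0 then 0 else h i.
have key : forall c : {ffun 'I_(size (e :: as_)) -> 'I_n.+1},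
    c \in [set c in fact_set (e :: as_) n | flen c == L] ->
    Sw (blowupD e as_) (xm (cn c)) = n - L * e /\ cn c 0 + Rs as_ (cn c) = L.
  move=> c; rewrite inE fact_setE flenE (@len_E as_) // => /andP [/eqP hs /eqP hl].
  split=> //; rewrite SD_E mul0n add0n.
  have -> : Ts e as_ (xm (cn c)) = Ts e as_ (cn c) by exact: Ts_ext.
  move: hs; rewrite Sg_E // hl; lia.
rewrite /dcount /dmax_n.
apply: (@inj_le _ _ _ _ (fun c => mk (size (blowupD e as_)) (n - L * e) (xm (cn c)))).
- move=> c1 c2 H1 H2 Heq.
  have [K1 L1] := key _ H1; have [K2 L2] := key _ H2.
  have [_ E1] := mk_in (pos_D e0 Hall) K1; have [_ E2] := mk_in (pos_D e0 Hall) K2.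
  have Hs : forall j, j < size as_ -> cn c1 j.+1 = cn c2 j.+1.
    move=> j jt; have jt' : j.+1 < size (blowupD e as_) by rewrite size_bl.
    by have := E1 _ jt'; rewrite Heq E2 //= => ->.
  apply: cn_inj => i; case: i => [|j] ij; last exact: Hs.
  have := Rs_extb Hs; lia.
- move=> c Hc; have [K1 _] := key _ Hc; by have [M _] := mk_in (pos_D e0 Hall) K1.
Qed.

Lemma I3 e as_ b y : 0 < e -> all (fun a => e < a) as_ -> inS (blowupD e as_) y ->
  dcount (blowupD e as_) b <= dcount (blowupD e as_) (b + y).
Proof.
move=> e0 Hall /inS_E [hy hyE].
have key : forall x : {ffun 'I_(size (blowupD e as_)) -> 'I_b.+1},
   x \in fact_set (blowupD e as_) b ->
   Sw (blowupD e as_) (fun i => cn x i + hy i) = b + y.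
  move=> x; rewrite fact_setE => /eqP h1; by rewrite Sw_add h1 hyE.
apply: (@inj_le _ _ _ _ (fun x => mk (size (blowupD e as_)) (b + y) (fun i => cn x i + hy i))).
- move=> x1 x2 H1 H2 Heq.
  have [_ E1] := mk_in (pos_D e0 Hall) (key _ H1); have [_ E2] := mk_in (pos_D e0 Hall) (key _ H2).
  apply: cn_inj => i ii; have := E1 _ ii; rewrite Heq E2 //; lia.
- move=> x Hx; by have [M _] := mk_in (pos_D e0 Hall) (key _ Hx).
Qed.

Lemma exists_max_val (P : nat -> Prop) K : (exists x, P x) -> (forall x, P x -> x < K) ->
  exists x, P x /\ forall y, P y -> y <= x.
Proof.
elim: K => [|K IH] [x Px] Hb; first by have := Hb x Px.
case: (classic (P K)) => PK.
  exists K; split=> // y Py; by have := Hb y Py.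
apply: IH; first by exists x.
move=> y Py; have := Hb y Py; rewrite ltnS leq_eqVlt => /orP [/eqP E|//].
by rewrite E in Py.
Qed.

Lemma exists_max_F (P : nat -> Prop) (F : nat -> nat) K : (exists x, P x) ->
  (forall x, P x -> x < K) -> exists x, P x /\ forall y, P y -> F y <= F x.
Proof.
move=> [x Px] Hb.
have := @exists_max_val (fun v => exists x, P x /\ F x = v) (\max_(i < K) F i).+1.
case.
- by exists (F x), x.
- move=> v [y [Py <-]]; rewrite ltnS.
  exact: (leq_bigmax_cond (P := xpredT) (F := fun i : 'I_K => F i) (Ordinal (Hb y Py))).
move=> v [[y [Py Ey]] H]; exists y; split=> // z Pz; rewrite Ey; apply: H; by exists z.
Qed.

Lemma exists_min (P : nat -> Prop) : (exists x, P x) -> exists x, P x /\ forall y, P y -> x <= y.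
Proof.
move=> [x Px]; elim: x {-2}x (leqnn x) Px => [|n IH] x xn Px.
  exists x; split=> // y _; move: xn; rewrite leqn0 => /eqP ->; done.
case: (classic (exists y, y < x /\ P y)) => [[y [yx Py]]|H].
  apply: (IH y) => //; lia.
exists x; split=> // y Py; rewrite leqNgt; apply/negP => yx; apply: H; by exists y.
Qed.

Theorem theorem4p8 (e : nat) (as_ : seq nat) :
  min_gens_numsg (e :: as_) ->
  2 <= e ->
  additive e (e :: as_) ->
  exists M : nat,
    is_max_of (inS (e :: as_)) (dmax_n (e :: as_)) M /\
    is_max_of (inmaxAp (blowupD e as_) e) (dcount (blowupD e as_)) M.
Proof.
case=> Hsort _ [N HN] e2 Hadd.
have Hall : all (fun a => e < a) as_ := order_path_min ltn_trans Hsort.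
have e0 : 0 < e by lia.
have HNB : forall n, N <= n -> inS (blowupD e as_) n.
  move=> n Nn; exact: F1 (HN n Nn).
have Apbound : forall w, inAp (blowupD e as_) e w -> w < N + e.
  move=> w [_ Hw]; rewrite ltnNge; apply/negP => wl.
  case: Hw => [|H]; first lia.
  apply: H; apply: HNB; lia.
have Ap0 : inAp (blowupD e as_) e 0 by split; [exact: inD_0 | left].
have Apnz : exists w, inAp (blowupD e as_) e w /\ w <> 0.
  have HN1 : N <= N * e + 1 by nia.
  have HN2 : (N * e + 1) %% e != 0 by rewrite modnMDl modn_small.
  have [w [[Sw_ Hmod] Hmin]] := @exists_min (fun w => inS (blowupD e as_) w /\ w %% e != 0)
    (ex_intro _ (N * e + 1) (conj (HNB _ HN1) HN2)).
  exists w; split; last by move=> w0; rewrite w0 mod0n in Hmod.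
  split=> //; case: (ltnP w e) => [|we]; first by left.
  right => Hwe.
  have Hm : (w - e) %% e != 0 by rewrite -(modnDr (w - e) e) subnK.
  have := Hmin (w - e) (conj Hwe Hm).
  lia.
have toMax : forall b, inAp (blowupD e as_) e b ->
    exists f, inmaxAp (blowupD e as_) e f /\ precT (blowupD e as_) b f.
  move=> b Hb.
  pose P := (fun w => [/\ inAp (blowupD e as_) e w, w <> 0 & precT (blowupD e as_) b w]).
  have ex1 : exists x, P x.
    rewrite /P.
    case: (eqVneq b 0) => [->|bnz].
      have [w [Apw nzw]] := Apnz; exists w; split=> //; split=> //; by rewrite subn0; case: Apw.
    exists b; split=> //; first by apply/eqP.
    by split=> //; rewrite subnn; apply: inD_0.
  have bd : forall x, P x -> x < N + e by move=> x [Ax _ _]; exact: Apbound.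
  have [f [[Apf nzf pbf] Hf]] := exists_max_val ex1 bd.
  exists f; split=> //; split=> // w' Apw' nzw' [fw' Sw'].
  have : w' <= f.
    apply: Hf; split=> //; case: pbf => bf Sbf; split; first exact: leq_trans fw'.
    have -> : w' - b = (w' - f) + (f - b) by lia.
    exact: inD_add.
  lia.
have [fs [Mfs Hfs]] := @exists_max_F (inmaxAp (blowupD e as_) e) (dcount (blowupD e as_)) (N + e)
  (ltac:(have [f [Hf _]] := toMax 0 Ap0; by exists f)) (ltac:(by move=> x [Ax _ _]; exact: Apbound)).
exists (dcount (blowupD e as_) fs); split; last by split=> //; exists fs.
case: Mfs => [[Sfs Apfs] _ _].
have [Hin Hord Hle] := Low e0 Hall Sfs Apfs.
split.
  exists (fs + fs * e); split=> //; apply/eqP; rewrite eqn_leq Hle andbT.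
  by have := I1 (fs + fs * e) e0 Hall; rewrite Hord addnK.
move=> n Hn.
apply: leq_trans (I1 n e0 Hall) _.
have [HbS HbAp] := ApLemma e0 Hall Hadd Hn.
set b := n - _ in HbS HbAp *.
have [f [Mf [bf Sfb]]] := toMax b (conj HbS HbAp).
apply: leq_trans (I3 b e0 Hall Sfb) _; rewrite subnKC //; exact: Hfs.
Qed.
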